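(* Let $E: y^2=x^3+Ax^2+Bx$ ($A,B\in\mathbb{Z}$) with $E(\mathbb{Q})[2]\simeq\mathbb{Z}/2\mathbb{Z}$, let $\Delta$ be the discriminant of $E$ and $\Delta'$ the discriminant of $E'$. Let $d$ be a squarefree integer and $p$ a prime with $p\mid d$ and $\gcd(p,2\Delta)=1$. Then $$W_p^d=\begin{cases}\langle \Delta\rangle & \text{if } \left(\frac{\Delta'}{p}\right)=-1,\\ \langle \Delta,\ d(A+2\sqrt{B})\rangle & \text{if } \left(\frac{\Delta'}{p}\right)=1,\end{cases}$$ as subgroups of $\mathbb{Q}_p^\times/(\mathbb{Q}_p^\times)^2$.
   Context: $E': y^2=x^3-2Ax^2+(A^2-4B)x$, $\phi:E\to E'$ the 2-isogeny with kernel $\langle(0,0)\rangle$; $E^d,E'^d$ are the quadratic twists by $d$ with twisted isogeny $\phi$. Up to squares, $\Delta\equiv A^2-4B$ and $\Delta'\equiv B$; in particular when $(\Delta'/p)=1$, $B$ is a square in $\mathbb{Q}_p$ so $\sqrt{B}\in\mathbb{Q}_p$. $W_p^d=\kappa_p(E'^d(\mathbb{Q}_p)/\phi(E^d(\mathbb{Q}_p)))\subset \mathbb{Q}_p^\times/(\mathbb{Q}_p^\times)^2$, where $\kappa_p$ is the local Kummer map (on the untwisted curve it sends $(x,y)\ne(0,0)$ to $x$ and $(0,0)$ to $\Delta$). *)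

(* Defs.v *)
From HB Require Import structures.
From mathcomp Require Import all_boot all_order all_algebra.
Set Implicit Arguments. Unset Strict Implicit. Unset Printing Implicit Defensive.
Import Order.TTheory GRing.Theory Num.Theory.
Local Open Scope ring_scope.

Definition disc (a b : int) : int := 16 * b ^+ 2 * (a ^+ 2 - 4 * b).

(* E : y^2 = x^3 + A x^2 + B x,  E' : y^2 = x^3 - 2A x^2 + (A^2 - 4B) x. *)
Definition discE (A B : int) : int := disc A B.
Definition discE' (A B : int) : int := disc (- (2 * A)) (A ^+ 2 - 4 * B).

Definition legendre (a : int) (p : nat) : int :=
  if (p%:Z %| a)%Z then 0
  else if [exists x : 'I_p, (p%:Z %| (x%:Z ^+ 2 - a))%Z] then 1 else -1.

Definition squarefree_int (d : int) : Prop :=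
  d != 0 /\ forall m : nat, (m * m %| `|d|)%N -> m = 1%N.

Definition padic_val_rat (p : nat) (q : rat) : int :=
  (logn p `|numq q|)%:Z - (logn p `|denq q|)%:Z.

Definition vclose (F : fieldType) (v : F -> int) (N : int) (x : F) : Prop :=
  x = 0 \/ N <= v x.

(* F together with v : F -> int is (a model of) the field Q_p: a field of
   characteristic 0 with a discrete valuation extending the p-adic valuation
   of Q, complete, and in which Q is dense.  This characterizes Q_p up to
   isomorphism of valued fields. *)
Definition is_Qp (p : nat) (F : fieldType) (v : F -> int) : Prop :=
  (forall n : nat, (n.+1)%:R != (0 : F)) /\ [/\
      (forall x y : F, x != 0 -> y != 0 -> v (x * y) = v x + v y),
      (forall x y : F, x != 0 -> y != 0 -> x + y != 0 ->
          (v x <= v (x + y)) || (v y <= v (x + y))),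
      (forall q : rat, q != 0 -> v (ratr q) = padic_val_rat p q),
      (forall s : nat -> F,
          (forall N : int, exists M : nat, forall m n : nat,
              (M <= m)%N -> (M <= n)%N -> vclose v N (s m - s n)) ->
          exists L : F, forall N : int, exists M : nat, forall n : nat,
              (M <= n)%N -> vclose v N (s n - L))
    & (forall (x : F) (N : int), exists q : rat, vclose v N (x - ratr q))].

(* u lies (modulo squares) in the image of the Kummer map
   E_{a,b}(F) -> F^x/(F^x)^2 for E_{a,b} : y^2 = x^3 + a x^2 + b x,
   which sends O |-> 1, (0,0) |-> b, and (x,y) |-> x otherwise. *)
Definition kummer_image (F : fieldType) (a b u : F) : Prop :=
  (exists w : F, w != 0 /\ u = w ^+ 2) \/
  (exists w : F, w != 0 /\ u = b * w ^+ 2) \/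
  (exists x y w : F, y ^+ 2 = x ^+ 3 + a * x ^+ 2 + b * x /\ x != 0 /\
       w != 0 /\ u = x * w ^+ 2).

(* W_p^d (as a set of representatives of F^x/(F^x)^2): the image of
   E'^d(F) : y^2 = x^3 - 2dA x^2 + d^2 (A^2 - 4B) x under the Kummer map. *)
Definition Wpd (F : fieldType) (A B d : int) (u : F) : Prop :=
  kummer_image ((- (2 * d * A))%:~R) ((d ^+ 2 * (A ^+ 2 - 4 * B))%:~R) u.

Definition span1 (F : fieldType) (g u : F) : Prop :=
  exists (e : bool) (w : F), w != 0 /\ u = g ^+ e * w ^+ 2.

Definition span2 (F : fieldType) (g1 g2 u : F) : Prop :=
  exists (e1 e2 : bool) (w : F), w != 0 /\ u = g1 ^+ e1 * g2 ^+ e2 * w ^+ 2.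

(* Main.v *)
Require Import Defs.
From HB Require Import structures.
From mathcomp Require Import all_boot all_order all_algebra.
From mathcomp Require Import ring lra zify.
Import Order.TTheory GRing.Theory Num.Theory.
Set Implicit Arguments. Unset Strict Implicit.
Local Open Scope ring_scope.

Section Val.
Variable (F : fieldType) (v : F -> int).
Hypothesis vM : forall x y : F, x != 0 -> y != 0 -> v (x * y) = v x + v y.
Hypothesis vD : forall x y : F, x != 0 -> y != 0 -> x + y != 0 ->
          (v x <= v (x + y)) || (v y <= v (x + y)).

Lemma v1 : v 1 = 0.
Proof. have h : (1 : F) != 0 := oner_neq0 _. have := vM h h. rewrite mulr1. lia. Qed.

Lemma vN1 : v (-1) = 0.
Proof.
have h1 : (-1 : F) != 0 by rewrite oppr_eq0 oner_neq0.
have := vM h1 h1. rewrite mulrNN mulr1 v1. lia.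
Qed.

Lemma vN (x : F) : v (- x) = v x.
Proof.
have [->|x0] := eqVneq x 0; first by rewrite oppr0.
have h1 : (-1 : F) != 0 by rewrite oppr_eq0 oner_neq0.
by rewrite -mulN1r vM // vN1 add0r.
Qed.

Lemma vV (x : F) : x != 0 -> v x^-1 = - v x.
Proof.
move=> x0. have := vM x0 (invr_neq0 x0). rewrite mulfV // v1. lia.
Qed.

Lemma vdiv (x y : F) : x != 0 -> y != 0 -> v (x / y) = v x - v y.
Proof. by move=> x0 y0; rewrite vM ?invr_neq0 // vV. Qed.

Lemma vX (x : F) n : x != 0 -> v (x ^+ n) = v x *+ n.
Proof.
move=> x0; elim: n => [|n IH]; first by rewrite expr0 v1.
by rewrite exprS vM ?expf_neq0 // IH mulrS.
Qed.

Lemma vstrict (x y : F) : x != 0 -> (y = 0 \/ v x < v y) -> x + y != 0 /\ v (x + y) = v x.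
Proof.
move=> x0 hy'.
have [->|y0] := eqVneq y 0; first by rewrite addr0.
have hy : v x < v y by case: hy' y0 => [->|//]; rewrite eqxx.
have s0 : x + y != 0.
  apply/eqP=> e; move: hy; have -> : y = - x by apply/eqP; rewrite -addr_eq0 addrC e.
  rewrite vN; lia.
split=> //.
have := vD x0 y0 s0.
have := @vD (x + y) (- y) s0 _ _.
rewrite oppr_eq0 y0 addrK x0 vN => /(_ isT isT) h2 h1.
move: hy; case/orP: h1; case/orP: h2; lia.
Qed.

Lemma vcl0 N : vclose v N 0. Proof. by left. Qed.

Lemma vcl_le N M (x : F) : N <= M -> vclose v M x -> vclose v N x.
Proof. by move=> h [->|h2]; [left|right; lia]. Qed.

Lemma vcl_opp N (x : F) : vclose v N x -> vclose v N (- x).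
Proof. by case=> [->|h]; [left; rewrite oppr0|right; rewrite vN]. Qed.

Lemma vcl_add N (x y : F) : vclose v N x -> vclose v N y -> vclose v N (x + y).
Proof.
case=> [->|hx]; first by rewrite add0r.
case=> [->|hy]; first by rewrite addr0; right.
have [x0|x0] := eqVneq x 0; first by rewrite x0 add0r; right.
have [y0|y0] := eqVneq y 0; first by rewrite y0 addr0; right.
have [s0|s0] := eqVneq (x + y) 0; first by left.
right; have := vD x0 y0 s0; case/orP; lia.
Qed.

Lemma vcl_sub N (x y : F) : vclose v N x -> vclose v N y -> vclose v N (x - y).
Proof. by move=> hx hy; apply: vcl_add => //; apply: vcl_opp. Qed.

Lemma vcl_mul N M (x y : F) : vclose v N x -> vclose v M y -> vclose v (N + M) (x * y).
Proof.
case=> [->|hx]; first by rewrite mul0r; left.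
case=> [->|hy]; first by rewrite mulr0; left.
have [x0|x0] := eqVneq x 0; first by rewrite x0 mul0r; left.
have [y0|y0] := eqVneq y 0; first by rewrite y0 mulr0; left.
by right; rewrite vM //; lia.
Qed.

Lemma vcl_val N (x : F) : x != 0 -> vclose v N x -> N <= v x.
Proof. by move=> x0 [e|//]; move: x0; rewrite e eqxx. Qed.

Lemma vcl_of N (x : F) : N <= v x -> vclose v N x.
Proof. by right. Qed.

Hypothesis comp : forall s : nat -> F,
          (forall N : int, exists M : nat, forall m n : nat,
              (M <= m)%N -> (M <= n)%N -> vclose v N (s m - s n)) ->
          exists L : F, forall N : int, exists M : nat, forall n : nat,
              (M <= n)%N -> vclose v N (s n - L).
Hypothesis two0 : (2 : F) != 0.
Hypothesis v2 : v 2 = 0.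

Section Hensel.
Variable z : F.
Hypothesis hz : vclose v 1 z.

Let c := 1 + z.

Fixpoint sq (k : nat) : F :=
  if k is k'.+1 then sq k' - (sq k' ^+ 2 - c) / (2 * sq k') else 1.

Let Inv k := [/\ sq k != 0, v (sq k) = 0 & vclose v (k%:Z + 1) (sq k ^+ 2 - c)].

Lemma sq_inv k : Inv k.
Proof.
elim: k => [|k [w0 vw he]].
  split; rewrite /= ?oner_neq0 ?v1 //.
  by rewrite expr1n /c opprD addrA subrr sub0r; apply: vcl_opp.
rewrite /Inv; set w := sq k in w0 vw he *.
set e := w ^+ 2 - c in he *.
have w20 : 2 * w != 0 by rewrite mulf_neq0.
have v2w : v (2 * w) = 0 by rewrite vM // v2 vw.
have hinc : vclose v (k%:Z + 1) (- (e / (2 * w))).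
  apply: vcl_opp; case: he => [->|h]; first by rewrite mul0r; left.
  have [e0|e0] := eqVneq e 0; first by rewrite e0 mul0r; left.
  by right; rewrite vdiv // v2w subr0.
have /= -> : sq k.+1 = w + - (e / (2 * w)) by [].
have hy : - (e / (2 * w)) = 0 \/ v w < v (- (e / (2 * w))).
  by case: hinc => [h|h]; [left|right; rewrite vw; lia].
have [s0 vs] := vstrict w0 hy.
split => //; first by rewrite vs.
have -> : (w + - (e / (2 * w))) ^+ 2 - c = (e / (2 * w)) ^+ 2.
  by rewrite /e; field; rewrite w0 two0.
have [e0|e0] := eqVneq e 0; first by rewrite e0 mul0r expr0n; left.
right; rewrite vX ?mulf_neq0 ?invr_neq0 // vdiv // v2w subr0.
move: he => [h|h]; first by move: e0; rewrite h eqxx.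
rewrite mulr2n; lia.
Qed.

Lemma sq_inc k : vclose v (k%:Z + 1) (sq k.+1 - sq k).
Proof.
have [w0 vw he] := sq_inv k.
have -> : sq k.+1 - sq k = - ((sq k ^+ 2 - c) / (2 * sq k)) by rewrite /= addrAC subrr add0r.
apply: vcl_opp; case: he => [->|h]; first by rewrite mul0r; left.
have [e0|e0] := eqVneq (sq k ^+ 2 - c) 0; first by rewrite e0 mul0r; left.
by right; rewrite vdiv ?mulf_neq0 // vM // v2 vw subr0.
Qed.

Lemma sq_cauchy M j : vclose v (M%:Z + 1) (sq (M + j) - sq M).
Proof.
elim: j => [|j IH]; first by rewrite addn0 subrr; left.
have -> : sq (M + j.+1) - sq M = (sq (M + j).+1 - sq (M + j)) + (sq (M + j) - sq M).
  by rewrite addnS addrA subrK.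
apply: vcl_add => //.
apply: (vcl_le (M := (M + j)%N%:Z + 1)); first by lia.
exact: sq_inc.
Qed.

Lemma hensel_sqrt : exists w : F, w ^+ 2 = 1 + z.
Proof.
have [L hL] : exists L : F, forall N : int, exists M : nat, forall n : nat,
              (M <= n)%N -> vclose v N (sq n - L).
  apply: comp => N; exists `|N|%N => m n hm hn.
  have -> : sq m - sq n = (sq m - sq `|N|%N) - (sq n - sq `|N|%N) by rewrite opprB addrA subrK.
  apply: (vcl_le (M := `|N|%N%:Z + 1)); first by lia.
  apply: vcl_sub.
    by rewrite -(subnKC hm); apply: sq_cauchy.
  by rewrite -(subnKC hn); apply: sq_cauchy.
exists L; apply/eqP; rewrite -subr_eq0; apply/negPn/negP => ne.
pose N := v (L ^+ 2 - (1 + z)) + 1.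
have [M hM] := hL `|N|%N%:Z.
pose n := (M + `|N|)%N.
have := hM n (leq_addr _ _) => hn.
have [w0 vw he] := sq_inv n.
have : vclose v `|N|%N%:Z (L ^+ 2 - (1 + z)).
  have -> : L ^+ 2 - (1 + z) = (L - sq n) * ((L - sq n) + 2 * sq n) + (sq n ^+ 2 - c).
    rewrite /c; ring.
  apply: vcl_add.
    rewrite -[X in vclose v X _]addr0; apply: vcl_mul.
      by rewrite -opprB; apply: vcl_opp.
    apply: vcl_add.
      by apply: (vcl_le (M := `|N|%N%:Z)); [lia| rewrite -opprB; apply: vcl_opp].
    by right; rewrite vM // v2 vw.
  by apply: (vcl_le (M := n%:Z + 1)); [rewrite /n; lia|].
have key : forall t : int, (absz (t+1))%:Z <= t -> False by move=> t; lia.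
by move=> /(vcl_val ne); apply: key.
Qed.

End Hensel.

Lemma vcl_unit_mul N (t u : F) : u != 0 -> v u = 0 -> vclose v N t -> vclose v N (t * u).
Proof.
move=> u0 vu [->|h]; first by rewrite mul0r; left.
have [t0|t0] := eqVneq t 0; first by rewrite t0 mul0r; left.
by right; rewrite vM // vu addr0.
Qed.

Lemma vcl_unit_div N (t u : F) : u != 0 -> v u = 0 -> vclose v N t -> vclose v N (t / u).
Proof.
move=> u0 vu h; apply: vcl_unit_mul => //; first by rewrite invr_neq0.
by rewrite vV // vu oppr0.
Qed.

Lemma vcl_prod1 (u t : F) : vclose v 0 u -> vclose v 0 t -> vclose v 1 (u * t) ->
  vclose v 1 u \/ vclose v 1 t.
Proof.
have [->|u0] := eqVneq u 0; first by left; left.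
have [->|t0] := eqVneq t 0; first by right; left.
move=> hu ht hut.
have := vcl_val (mulf_neq0 u0 t0) hut; rewrite vM //.
have := vcl_val u0 hu; have := vcl_val t0 ht => h1 h2 h3.
have [h|h] := boolP (1 <= v u); first by left; right.
by right; right; lia.
Qed.

Lemma one_plus (z : F) : vclose v 1 z -> 1 + z != 0.
Proof.
move=> hz; have [] := @vstrict 1 z (oner_neq0 _) _ => //.
by case: hz => [->|h]; [left|right; rewrite v1; lia].
Qed.

Lemma sqrt1 (z : F) : vclose v 1 z -> exists w, w != 0 /\ w ^+ 2 = 1 + z.
Proof.
move=> hz; have [w hw] := hensel_sqrt hz; exists w; split => //.
by apply/eqP => w0; move: (one_plus hz); rewrite -hw w0 expr0n eqxx.
Qed.

Lemma core (a b d X y : F) : d != 0 -> v d = 1 -> vclose v 0 a -> b != 0 -> v b = 0 ->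
  a ^+ 2 - 4 * b != 0 -> v (a ^+ 2 - 4 * b) = 0 -> X != 0 ->
  y ^+ 2 = d ^+ 3 * X * ((X - a) ^+ 2 - 4 * b) ->
  (exists w, w != 0 /\ d * X = w ^+ 2) \/
  (exists w, w != 0 /\ d * X = (a ^+ 2 - 4 * b) * w ^+ 2) \/
  (v X = 0 /\ vclose v 1 ((X - a) ^+ 2 - 4 * b)).
Proof.
move=> d0 vd ha b0 vb c0 vc X0 hy.
have [c Hc] : exists c, c = a ^+ 2 - 4 * b by eexists.
rewrite -Hc in c0 vc *.
have v2a : vclose v 0 (2 * a) by rewrite -[0]addr0; apply: vcl_mul => //; right; rewrite v2.
have [hlt|hge] := ltP (v X) 0.
  pose z := - (2 * a) * X^-1 + c * X^-1 ^+ 2.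
  have hz : vclose v 1 z.
    apply: vcl_add.
      rewrite -[1]add0r; apply: vcl_mul; first exact: vcl_opp.
      by right; rewrite vV //; lia.
    apply: (@vcl_le 1 2); first by [].
    rewrite -[2]add0r; apply: vcl_mul; first by right; rewrite vc.
    by right; rewrite vX ?invr_neq0 // vV // mulr2n; lia.
  have [w [w0 hw]] := sqrt1 hz.
  have hQ : (X - a) ^+ 2 - 4 * b = X ^+ 2 * w ^+ 2.
    by rewrite hw /z Hc; field.
  have y0 : y != 0.
    apply/eqP => y0; have : d ^+ 3 * X * ((X - a) ^+ 2 - 4 * b) != 0.
      by rewrite hQ !mulf_neq0 ?expf_neq0.
    by rewrite -hy y0 expr0n eqxx.
  left; exists (y / (d * X * w)); split; first by rewrite mulf_neq0 ?invr_neq0 ?mulf_neq0.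
  by rewrite expr_div_n hy hQ; field; rewrite d0 X0 w0.
have [hgt|hle] := ltP 0 (v X).
  pose z := (X * (X - 2 * a)) / c.
  have hz : vclose v 1 z.
    apply: vcl_unit_div => //; rewrite -[1]addr0; apply: vcl_mul; first by right; lia.
    by apply: vcl_sub => //; right; lia.
  have [w [w0 hw]] := sqrt1 hz.
  have hQ : (X - a) ^+ 2 - 4 * b = c * w ^+ 2.
    by rewrite hw /z Hc; field; rewrite -Hc.
  have y0 : y != 0.
    apply/eqP => y0; have : d ^+ 3 * X * ((X - a) ^+ 2 - 4 * b) != 0.
      by rewrite hQ !mulf_neq0 ?expf_neq0.
    by rewrite -hy y0 expr0n eqxx.
  right; left; exists (y / (d * c * w)); split; first by rewrite mulf_neq0 ?invr_neq0 ?mulf_neq0.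
  by rewrite expr_div_n hy hQ; field; rewrite d0 c0 w0.
right; right; have vX0 : v X = 0 by lia.
split => //.
have [->|Q0] := eqVneq ((X - a) ^+ 2 - 4 * b) 0; first by left.
have hQ : vclose v 0 ((X - a) ^+ 2 - 4 * b).
  apply: vcl_sub.
    rewrite -[0]addr0; apply: vcl_mul; apply: vcl_sub => //; right; lia.
  rewrite -[0]addr0; apply: vcl_mul; right; rewrite ?vb //.
  have -> : (4 : F) = 2 * 2 by rewrite -natrM.
  by rewrite vM // v2.
have y0 : y != 0.
  apply/eqP => y0; have : d ^+ 3 * X * ((X - a) ^+ 2 - 4 * b) != 0.
    by rewrite !mulf_neq0 ?expf_neq0.
  by rewrite -hy y0 expr0n eqxx.
have := @vX y 2 y0; rewrite hy vM ?mulf_neq0 ?expf_neq0 // vM ?expf_neq0 // vX // vd vX0.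
have := vcl_val Q0 hQ; move=> h1 h2.
right; move: h2; rewrite mulr2n; rewrite [1 *+ 3]/=; lia.
Qed.

Lemma core2 (a b s X : F) : vclose v 0 a -> s ^+ 2 = b -> b != 0 -> v b = 0 ->
  a ^+ 2 - 4 * b != 0 -> v (a ^+ 2 - 4 * b) = 0 -> 
  vclose v 0 X -> vclose v 1 ((X - a) ^+ 2 - 4 * b) ->
  exists w, w != 0 /\ (X = (a + 2 * s) * w ^+ 2 \/ X = (a - 2 * s) * w ^+ 2).
Proof.
move=> ha hs b0 vb c0 vc hX hQ.
have s0 : s != 0 by apply/eqP => s0; move: b0; rewrite -hs s0 expr0n eqxx.
have vs : v s = 0 by move: vb; rewrite -hs vX // mulr2n; lia.
have h2s : vclose v 0 (2 * s) by rewrite -[0]addr0; apply: vcl_mul; right; rewrite ?v2 ?vs.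
have hc : a ^+ 2 - 4 * b = (a + 2 * s) * (a - 2 * s) by rewrite -hs; ring.
have g10 : a + 2 * s != 0 by apply/eqP => e; move: c0; rewrite hc e mul0r eqxx.
have g20 : a - 2 * s != 0 by apply/eqP => e; move: c0; rewrite hc e mulr0 eqxx.
have hg1 : vclose v 0 (a + 2 * s) by apply: vcl_add.
have hg2 : vclose v 0 (a - 2 * s) by apply: vcl_sub.
have := vcl_val g10 hg1; have := vcl_val g20 hg2; move: vc; rewrite hc vM // => vc h2 h1.
have vg1 : v (a + 2 * s) = 0 by lia.
have vg2 : v (a - 2 * s) = 0 by lia.
have hQ' : (X - a) ^+ 2 - 4 * b = (X - (a + 2 * s)) * (X - (a - 2 * s)) by rewrite -hs; ring.
rewrite hQ' in hQ.
have [h|h] := vcl_prod1 (vcl_sub hX hg1) (vcl_sub hX hg2) hQ.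
  have [w [w0 hw]] := sqrt1 (vcl_unit_div g10 vg1 h).
  exists w; split => //; left; rewrite hw; field; exact: g10.
have [w [w0 hw]] := sqrt1 (vcl_unit_div g20 vg2 h).
exists w; split => //; right; rewrite hw; field; exact: g20.
Qed.
End Val.

Section Main.
Variables (p : nat) (F : fieldType) (v : F -> int).
Hypothesis pp : prime p.
Hypothesis char : forall n : nat, (n.+1)%:R != (0 : F).
Hypothesis vM : forall x y : F, x != 0 -> y != 0 -> v (x * y) = v x + v y.
Hypothesis vD : forall x y : F, x != 0 -> y != 0 -> x + y != 0 ->
          (v x <= v (x + y)) || (v y <= v (x + y)).
Hypothesis vrat : forall q : rat, q != 0 -> v (ratr q) = padic_val_rat p q.

Lemma intF0 (z : int) : z != 0 -> (z%:~R : F) != 0.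
Proof.
case: z => [[|n]|n] //= _; first by rewrite -pmulrn char.
by rewrite NegzE intrN oppr_eq0 -pmulrn char.
Qed.

Lemma vint (z : int) : z != 0 -> v z%:~R = (logn p `|z|)%:Z.
Proof.
move=> z0; have q0 : (z%:~R : rat) != 0 by rewrite intr_eq0.
have := vrat q0; rewrite /ratr numq_int denq_int divr1 => ->.
by rewrite /padic_val_rat numq_int denq_int logn1 subr0.
Qed.

Lemma vint_unit (z : int) : ~~ (p%:Z %| z)%Z -> z != 0 /\ v z%:~R = 0.
Proof.
move=> nd; have z0 : z != 0 by apply/eqP => z0; move: nd; rewrite z0 dvdz0.
split => //; rewrite vint // logn_coprime //.
by rewrite prime_coprime //; move: nd; rewrite dvdzE.
Qed.

Lemma vint_ge0 (z : int) : vclose v 0 (z%:~R : F).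
Proof.
have [->|z0] := eqVneq z 0; first by left.
by right; rewrite vint.
Qed.

Lemma vint_dvd (z : int) : (p%:Z %| z)%Z -> vclose v 1 (z%:~R : F).
Proof.
have [->|z0] := eqVneq z 0; first by left.
move=> h; right; rewrite vint //.
have : (0 < logn p `|z|)%N.
  by rewrite logn_gt0 mem_primes pp absz_gt0 z0 /=; move: h; rewrite dvdzE.
lia.
Qed.

Lemma vcl_dvd (z : int) : vclose v 1 (z%:~R : F) -> (p%:Z %| z)%Z.
Proof.
have [->|z0] := eqVneq z 0; first by rewrite dvdz0.
case=> [e|h]; first by move: (intF0 z0); rewrite e eqxx.
move: h; rewrite vint // => h.
have : (0 < logn p `|z|)%N by lia.
by rewrite logn_gt0 mem_primes dvdzE => /and3P[].
Qed.


Hypothesis comp : forall s : nat -> F,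
          (forall N : int, exists M : nat, forall m n : nat,
              (M <= m)%N -> (M <= n)%N -> vclose v N (s m - s n)) ->
          exists L : F, forall N : int, exists M : nat, forall n : nat,
              (M <= n)%N -> vclose v N (s n - L).
Hypothesis dens : forall (x : F) (N : int), exists q : rat, vclose v N (x - ratr q).
Variables A B d : int.
Hypothesis hdisc : discE A B != 0.
Hypothesis sqf : squarefree_int d.
Hypothesis pd : (p%:Z %| d)%Z.
Hypothesis cop : coprime p `|(2 * discE A B)%R|%N.

Lemma notdvd (z : int) : (z %| 2 * discE A B)%Z -> ~~ (p%:Z %| z)%Z.
Proof.
move=> hz; apply/negP => h.
have := dvdz_trans h hz; rewrite dvdzE /= => /gcdn_idPl hp.
by move: cop; rewrite /coprime hp => /eqP p1; move: pp; rewrite p1.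
Qed.

Let aF : F := A%:~R.
Let bF : F := B%:~R.
Let dF : F := d%:~R.

Lemma E2 : ((2 : int)%:~R : F) = 2. Proof. by []. Qed.
Lemma E4 : ((4 : int)%:~R : F) = 4. Proof. by []. Qed.
Lemma E16 : ((16 : int)%:~R : F) = 16. Proof. by []. Qed.

Lemma Ea : ((- (2 * d * A))%:~R : F) = - (2 * dF * aF).
Proof. by rewrite intrN !intrM. Qed.
Lemma Eb : ((d ^+ 2 * (A ^+ 2 - 4 * B))%:~R : F) = dF ^+ 2 * (aF ^+ 2 - 4 * bF).
Proof. by rewrite intrM intrB !rmorphXn intrM. Qed.
Lemma Ed : ((discE A B)%:~R : F) = 16 * bF ^+ 2 * (aF ^+ 2 - 4 * bF).
Proof. by rewrite /discE /disc !intrM intrB !rmorphXn intrM. Qed.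

Lemma unit_of (z : int) : (z %| 2 * discE A B)%Z -> (z%:~R : F) != 0 /\ v z%:~R = 0.
Proof. by move=> /notdvd /vint_unit [z0 ->]; rewrite intF0. Qed.

Lemma dv_mul (k z : int) : 2 * discE A B = k * z -> (z %| 2 * discE A B)%Z.
Proof. by move=> ->; apply: dvdz_mull; apply: dvdzz. Qed.

Lemma u2 : (2 : F) != 0 /\ v 2 = 0.
Proof. by rewrite -E2; apply: unit_of; apply: (@dv_mul (discE A B)); rewrite mulrC. Qed.

Lemma u16 : (16 : F) != 0 /\ v 16 = 0.
Proof.
rewrite -E16; apply: unit_of; apply: (@dv_mul (2 * B ^+ 2 * (A ^+ 2 - 4 * B))).
by rewrite /discE /disc; ring.
Qed.

Lemma uB : bF != 0 /\ v bF = 0.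
Proof.
apply: unit_of; apply: (@dv_mul (32 * B * (A ^+ 2 - 4 * B))).
by rewrite /discE /disc; ring.
Qed.

Lemma uC : aF ^+ 2 - 4 * bF != 0 /\ v (aF ^+ 2 - 4 * bF) = 0.
Proof.
have -> : aF ^+ 2 - 4 * bF = (A ^+ 2 - 4 * B)%:~R by rewrite intrB rmorphXn intrM.
apply: unit_of; apply: (@dv_mul (32 * B ^+ 2)).
by rewrite /discE /disc; ring.
Qed.

Lemma ud : dF != 0 /\ v dF = 1.
Proof.
have d0 : d != 0 by case: sqf.
split; first exact: intF0.
rewrite /dF vint //.
have h1 : (0 < logn p `|d|)%N.
  by rewrite logn_gt0 mem_primes pp absz_gt0 d0 /=; move: pd; rewrite dvdzE.
have h2 : (logn p `|d| <= 1)%N.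
  rewrite leqNgt; apply/negP => h.
  have : (p ^ 2 %| `|d|)%N by rewrite pfactor_dvdn // absz_gt0.
  rewrite expnS expn1 => /(proj2 sqf) p1; by move: pp; rewrite p1.
lia.
Qed.

Lemma ha : vclose v 0 aF.
Proof. exact: vint_ge0. Qed.

Lemma discE'_eq : discE' A B = 256 * (A ^+ 2 - 4 * B) ^+ 2 * B.
Proof. by rewrite /discE' /disc; ring. Qed.

Lemma Ec : ((A ^+ 2 - 4 * B)%:~R : F) = aF ^+ 2 - 4 * bF.
Proof. by rewrite intrB rmorphXn intrM. Qed.

Lemma sqrtB : legendre (discE' A B) p = 1 -> exists s : F, s ^+ 2 = bF.
Proof.
move=> hl.
have : [exists x : 'I_p, (p%:Z %| x%:Z ^+ 2 - discE' A B)%Z].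
  by move: hl; rewrite /legendre; case: ifP => // _; case: ifP.
case/existsP => x hx.
have hK := vint_dvd hx.
have [c0 vc] := uC; have [b0 vb] := uB; have [t0 v16] := u16; have [two0 v2] := u2.
set cF := aF ^+ 2 - 4 * bF in c0 vc.
pose s0 := ((x%:Z)%:~R : F) / (16 * cF).
have e1 : s0 ^+ 2 - bF = ((x%:Z ^+ 2 - discE' A B)%:~R : F) / (16 * cF) ^+ 2.
  rewrite intrB rmorphXn discE'_eq !intrM Ec /s0 -/cF.
  have -> : ((256 : int)%:~R : F) = 16 * 16 by rewrite -natrM.
  by field; rewrite c0 t0.
have u0 : (16 * cF) ^+ 2 != 0 by rewrite expf_neq0 // mulf_neq0.
have hs : vclose v 1 (s0 ^+ 2 - bF).
  rewrite e1; apply: (vcl_unit_div vM) => //.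
  by rewrite (vX vM) ?mulf_neq0 // vM // v16 vc.
have [s20 vs2] : s0 ^+ 2 != 0 /\ v (s0 ^+ 2) = v bF.
  have -> : s0 ^+ 2 = bF + (s0 ^+ 2 - bF) by rewrite addrC subrK.
  apply: (vstrict vM vD) => //.
  by case: hs => [->|h]; [left|right; rewrite vb; lia].
have hz : vclose v 1 (- (s0 ^+ 2 - bF) / s0 ^+ 2).
  apply: (vcl_unit_div vM) => //; first by rewrite vs2.
  exact: (vcl_opp vM).
have [w [w0 hw]] := sqrt1 vM vD comp two0 v2 hz.
have s00 : s0 != 0 by apply/eqP => e; move: s20; rewrite e expr0n eqxx.
exists (s0 * w); rewrite exprMn hw; field; exact: s00.
Qed.

Lemma case1contra : legendre (discE' A B) p = -1 -> forall X : F, X != 0 -> v X = 0 ->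
  vclose v 1 ((X - aF) ^+ 2 - 4 * bF) -> False.
Proof.
move=> hl X X0 vX0 hQ.
have [q hq] := dens X 1.
have m0 : denq q != 0 := denq_neq0 q.
have er : ratr q = ((numq q)%:~R : F) / (denq q)%:~R by [].
move: er hq; set r := ratr q; set n := numq q; set m := denq q => er hq.
have hX0 : vclose v 0 X by right; rewrite vX0.
have hr : vclose v 0 r.
  have -> : r = X - (X - r) by ring.
  by apply: (vcl_sub vM vD) => //; apply: (vcl_le (M := 1)).
have pm : ~~ (p%:Z %| m)%Z.
  apply/negP => hm.
  have pn : ~~ (p%:Z %| n)%Z.
    apply/negP => hn; have := coprime_num_den q; rewrite /coprime -/n -/m.
    have : (p %| gcdn `|n| `|m|)%N by rewrite dvdn_gcd; move: hn hm; rewrite !dvdzE => -> ->.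
    by move=> h /eqP e; move: h; rewrite e dvdn1 => /eqP p1; move: pp; rewrite p1.
  have [n0 vn] := vint_unit pn.
  have vm : 1 <= v (m%:~R : F) := vcl_val (intF0 m0) (vint_dvd hm).
  have r0 : r != 0 by rewrite er mulf_neq0 ?invr_neq0 ?intF0.
  have := vcl_val r0 hr; rewrite er (vdiv vM) ?intF0 // vn sub0r oppr_ge0 => h; by move: (le_trans vm h).
have [_ vm] := vint_unit pm.
have mF0 : (m%:~R : F) != 0 := intF0 m0.
pose K := (n - A * m) ^+ 2 - 4 * B * m ^+ 2.
have eK : (K%:~R : F) = (m%:~R) ^+ 2 * ((r - aF) ^+ 2 - 4 * bF).
  by rewrite /K er !(intrB, intrM, rmorphXn); field.
have hK : vclose v 1 (K%:~R : F).
  rewrite eK mulrC; apply: (vcl_unit_mul vM); first by rewrite expf_neq0.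
    by rewrite (vX vM) // vm.
  have -> : (r - aF) ^+ 2 - 4 * bF = ((X - aF) ^+ 2 - 4 * bF) - (X - r) * (X + r - 2 * aF) by ring.
  apply: (vcl_sub vM vD) => //; rewrite -[1]addr0; apply: (vcl_mul vM) => //.
  apply: (vcl_sub vM vD); first exact: (vcl_add vD).
  rewrite -[0]addr0; apply: (vcl_mul vM); last exact: ha.
  by right; rewrite (proj2 u2).
have pK := vcl_dvd hK.
have [u [w hb]] := Bezoutz m p.
have cm : coprime `|m| p by rewrite coprime_sym prime_coprime //; move: pm; rewrite dvdzE.
have g1 : gcdz m p = 1 by rewrite /gcdz (eqP cm).
rewrite g1 in hb.
pose C := A ^+ 2 - 4 * B.
pose t := 8 * C * (n - A * m) * u.
have ht : (p%:Z %| t ^+ 2 - discE' A B)%Z.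
  have -> : t ^+ 2 - discE' A B = 64 * C ^+ 2 * u ^+ 2 * K
      - 256 * C ^+ 2 * B * (u * m + 1) * w * p
      + 256 * C ^+ 2 * B * (u * m + 1) * (u * m + w * p - 1).
    by rewrite discE'_eq /t /K /C; ring.
  rewrite hb subrr mulr0 addr0; apply: rpredB; first exact: dvdz_mull.
  exact: dvdz_mull (dvdzz _).
have p0 : (0 < p%:Z) by rewrite ltz_nat prime_gt0.
have hge := modz_ge0 t (lt0r_neq0 p0).
have hlt := ltz_pmod t p0.
have xlt : (`|(t %% p)%Z| < p)%N by rewrite -ltz_nat gez0_abs.
pose x : 'I_p := Ordinal xlt.
have hx : (p%:Z %| x%:Z ^+ 2 - discE' A B)%Z.
  rewrite /= gez0_abs //.
  have emd : (t %% p)%Z = t - (t %/ p)%Z * p by rewrite {2}(divz_eq t p); ring.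
  have -> : (t %% p)%Z ^+ 2 - discE' A B
      = (t ^+ 2 - discE' A B) + (- (t %/ p)%Z * ((t %% p)%Z + t)) * p.
    by rewrite emd; ring.
  by apply: rpredD => //; apply: dvdz_mull (dvdzz _).
move: hl; rewrite /legendre; case: ifP => // _.
have -> : [exists x : 'I_p, (p%:Z %| x%:Z ^+ 2 - discE' A B)%Z] by apply/existsP; exists x.
by [].
Qed.

Lemma hard (u : F) : Wpd A B d u ->
  (exists w, w != 0 /\ u = w ^+ 2) \/
  (exists w, w != 0 /\ u = (aF ^+ 2 - 4 * bF) * w ^+ 2) \/
  (exists X w, [/\ X != 0, v X = 0, vclose v 1 ((X - aF) ^+ 2 - 4 * bF), w != 0 &
      u = dF * X * w ^+ 2]).
Proof.
have [c0 vc] := uC; have [b0 vb] := uB; have [two0 v2] := u2; have [d0 vd] := ud.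
rewrite /Wpd Ea Eb -/aF -/bF -/dF.
case=> [[w [w0 ->]] | [[w [w0 ->]] | [x [y [w [hy [x0 [w0 ->]]]]]]]].
- by left; exists w.
- by right; left; exists (dF * w); split; [rewrite mulf_neq0 | ring].
pose X := x / dF.
have X0 : X != 0 by rewrite mulf_neq0 ?invr_neq0.
have ex : x = dF * X by rewrite /X; field.
have hy' : y ^+ 2 = dF ^+ 3 * X * ((X - aF) ^+ 2 - 4 * bF).
  by rewrite hy ex; ring.
have [[w' [w'0 e]] | [[w' [w'0 e]] | [vX0 hQ]]] :=
  core vM vD comp two0 v2 d0 vd ha b0 vb c0 vc X0 hy'.
- left; exists (w' * w); split; first by rewrite mulf_neq0.
  by rewrite ex e; ring.
- right; left; exists (w' * w); split; first by rewrite mulf_neq0.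
  by rewrite ex e; ring.
- by right; right; exists X, w; split => //; rewrite ex.
Qed.

Lemma four0 : (4 : F) != 0.
Proof. have -> : (4 : F) = 2 * 2 by rewrite -natrM. by rewrite mulf_neq0 // (proj1 u2). Qed.

Lemma case1 : legendre (discE' A B) p = -1 ->
     forall u : F, u != 0 -> (Wpd A B d u <-> span1 (discE A B)%:~R u).
Proof.
move=> hl u u0.
have [c0 vc] := uC; have [b0 vb] := uB; have [two0 v2] := u2; have [d0 vd] := ud.
have f0 := four0.
split.
- move/hard => [[w [w0 ->]] | [[w [w0 ->]] | [X [w [X0 vX0 hQ _ _]]]]].
  + by exists false, w; rewrite expr0 mul1r.
  + exists true, (w / (4 * bF)); split; first by rewrite !(mulf_neq0, invr_neq0).
    by rewrite Ed expr1 -/aF -/bF; field; rewrite b0 f0.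
  + exfalso; move: (case1contra hl) => H; exact: (H X X0 vX0 hQ).
- case=> [[] [w [w0 ->]]].
  + rewrite /Wpd Ea Eb -/aF -/bF -/dF; right; left; exists (4 * bF * w / dF); split.
      by rewrite !(mulf_neq0, invr_neq0).
    by rewrite Ed expr1 -/aF -/bF; field.
  + by rewrite /Wpd; left; exists w; rewrite expr0 mul1r.
Qed.

Lemma case2 : legendre (discE' A B) p = 1 ->
     (exists s : F, s ^+ 2 = B%:~R) /\
     forall s : F, s ^+ 2 = B%:~R ->
       forall u : F, u != 0 ->
         (Wpd A B d u <->
          span2 (discE A B)%:~R (d%:~R * (A%:~R + 2 * s)) u).
Proof.
move=> hl; split; first exact: sqrtB.
move=> s hs u u0.
have [c0 vc] := uC; have [b0 vb] := uB; have [two0 v2] := u2; have [d0 vd] := ud.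
have f0 := four0.
have s0 : s != 0 by apply/eqP => e; move: b0; rewrite /bF -hs e expr0n eqxx.
have hc : aF ^+ 2 - 4 * bF = (aF + 2 * s) * (aF - 2 * s) by rewrite /bF -hs; ring.
have g10 : aF + 2 * s != 0 by apply/eqP => e; move: c0; rewrite hc e mul0r eqxx.
have g20 : aF - 2 * s != 0 by apply/eqP => e; move: c0; rewrite hc e mulr0 eqxx.
rewrite -/aF -/dF.
split.
- move/hard => [[w [w0 ->]] | [[w [w0 ->]] | [X [w [X0 vX0 hQ w0 ->]]]]].
  + by exists false, false, w; rewrite !expr0 !mul1r.
  + exists true, false, (w / (4 * bF)); split; first by rewrite !(mulf_neq0, invr_neq0).
    by rewrite Ed expr1 expr0 mulr1 -/aF -/bF; field; rewrite b0 f0.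
  + have hX : vclose v 0 X by right; rewrite vX0.
    have [w' [w'0 [eX|eX]]] := core2 vM vD comp two0 v2 ha hs b0 vb c0 vc hX hQ.
    * exists false, true, (w' * w); split; first by rewrite mulf_neq0.
      by rewrite eX expr0 expr1 mul1r; ring.
    * exists true, true, (w' * w / (4 * bF * (aF + 2 * s))); split.
        by rewrite !(mulf_neq0, invr_neq0).
      rewrite eX Ed !expr1 -/aF -/bF /bF -hs; field.
      by rewrite s0 g10 f0.
- case=> e1 [e2 [w [w0 ->]]]; case: e1; case: e2; rewrite /Wpd Ea Eb -/aF -/bF -/dF.
  + right; right; exists (dF * (aF - 2 * s)), 0, (4 * bF * (aF + 2 * s) * w).
    split; first by rewrite /bF -hs; ring.
    split; first by rewrite mulf_neq0.
    split; first by rewrite !mulf_neq0.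
    by rewrite Ed !expr1 -/aF -/bF /bF -hs; ring.
  + right; left; exists (4 * bF * w / dF); split.
      by rewrite !(mulf_neq0, invr_neq0).
    by rewrite Ed expr1 expr0 mulr1 -/aF -/bF; field.
  + right; right; exists (dF * (aF + 2 * s)), 0, w.
    split; first by rewrite /bF -hs; ring.
    split; first by rewrite mulf_neq0.
    split => //.
    by rewrite expr0 expr1 mul1r.
  + by left; exists w; rewrite !expr0 !mul1r.
Qed.

End Main.

Unset Implicit Arguments.

Theorem lemma3p1 (A B d : int) (p : nat) (F : fieldType) (v : F -> int) :
  discE A B != 0 ->
  (forall x : rat, x ^+ 3 + A%:~R * x ^+ 2 + B%:~R * x = 0 -> x = 0) ->
  squarefree_int d ->
  prime p -> (p%:Z %| d)%Z -> coprime p `|(2 * discE A B)%R|%N ->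
  @is_Qp p F v ->
  (legendre (discE' A B) p = -1 ->
     forall u : F, u != 0 -> (Wpd A B d u <-> span1 (discE A B)%:~R u)) /\
  (legendre (discE' A B) p = 1 ->
     (exists s : F, s ^+ 2 = B%:~R) /\
     forall s : F, s ^+ 2 = B%:~R ->
       forall u : F, u != 0 ->
         (Wpd A B d u <->
          span2 (discE A B)%:~R (d%:~R * (A%:~R + 2 * s)) u)).
Proof.
move=> hdisc _ sqf pp pd cop [char [vM vD vrat comp dens]].
split.
- exact: (case1 pp char vM vD vrat comp dens hdisc sqf pd cop).
- exact: (case2 pp char vM vD vrat comp hdisc sqf pd cop).
Qed.
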